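(* For every integer $n\ge1$, there exists an injective group homomorphism $D_{2^{n+1}}\hookrightarrow T\mathcal R_{2^n}(\mathbb F_2)$.
   Context: The Riordan group over $\mathbb F_2$ consists of pairs $(g,f)$ of formal power series over $\mathbb F_2$ with $g=1+\cdots$, $f=t+\cdots$, identified with lower triangular matrices $(d_{i,k})$, $d_{i,k}=[t^i]gf^k$, with matrix multiplication (equivalently $(g_1,f_1)(g_2,f_2)=(g_1\cdot(g_2\circ f_1),\,f_2\circ f_1)$). For $m\ge0$, $T\mathcal R_m(\mathbb F_2)$ is the finite group of $(m+1)\times(m+1)$ upper-left truncations $(d_{i,k})_{0\le i,k\le m}$ of these matrices. $D_{2^{q}}$ denotes the dihedral group $\langle r,s\mid r^{2^{q}}=s^2=1,\ rsr=s\rangle$ of order $2^{q+1}$. *)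

(* Defs.v *)
From mathcomp Require Import all_boot all_order all_algebra all_fingroup all_solvable.
Set Implicit Arguments. Unset Strict Implicit. Unset Printing Implicit Defensive.
Import GRing.Theory.
Local Open Scope ring_scope.

(* A matrix M : 'M['F_2]_(m.+1) lies in T R_m(F_2) iff it is the upper-left
   (m+1)x(m+1) truncation of a Riordan matrix (g,f) with g = 1 + ..., f = t + ...,
   i.e. M i k = [t^i] g f^k.  Only coefficients of degree <= m matter, so the
   power series g, f may be represented by polynomials. *)
Definition in_TR (m : nat) (M : 'M['F_2]_(m.+1)) : Prop :=
  exists g f : {poly 'F_2},
    [/\ g`_0 = 1, f`_0 = 0, f`_1 = 1 &
        forall i k : 'I_(m.+1), M i k = (g * f ^+ k)`_i].
Arguments in_TR : clear implicits.

(* Main.v *)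
Require Import Defs.
From mathcomp Require Import all_boot all_order all_algebra all_fingroup all_solvable.
From mathcomp Require Import ring zify.
Set Implicit Arguments. Unset Strict Implicit. Unset Printing Implicit Defensive.
Import GRing.Theory.
Local Open Scope ring_scope.

Local Notation F := 'F_2.
Local Notation P := {poly 'F_2}.

Lemma two0 : (2%:R : F) = 0. Proof. exact: val_inj. Qed.
Lemma two0P : (2%:R : P) = 0. Proof. by rewrite -polyC_natr two0. Qed.
Lemma add_same (x : P) : x + x = 0.
Proof. by rewrite -mulr2n -mulr_natr two0P mulr0. Qed.

Lemma sum_trunc (T : nat -> F) a b :
  (forall j, (a <= j)%N -> (j < b)%N -> T j = 0) -> (a <= b)%N ->
  \sum_(j < b) T j = \sum_(j < a) T j.
Proof.
move=> H ab; rewrite -(subnKC ab) big_split_ord /= [X in _ + X]big1 ?addr0 // => j _.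
by apply: H; [rewrite leq_addr | rewrite -{2}(subnKC ab) ltn_add2l].
Qed.

Lemma Xdvd (f : P) : f`_0 = 0 -> 'X %| f.
Proof.
move=> f0; have := dvdp_XsubCl f 0; rewrite polyC0 subr0 => ->.
by rewrite /root horner_coef0 f0.
Qed.

Lemma coef_low (h f : P) j i : 'X %| f -> (i < j)%N -> (h * f ^+ j)`_i = 0.
Proof.
move=> Xf ij; have : 'X^j %| h * f ^+ j by apply/dvdp_mull/dvdp_exp2r.
by case/dvdpP => q ->; rewrite coefMXn ij.
Qed.

Lemma compC (h p f : P) i : 'X %| f ->
  (h * (p \Po f))`_i = \sum_(j < i.+1) p`_j * (h * f ^+ j)`_i.
Proof.
move=> Xf; rewrite comp_polyE mulr_sumr coef_sum.
under eq_bigr => j _ do rewrite -scalerAr coefZ.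
rewrite (@sum_trunc (fun j => p`_j * (h * f ^+ j)`_i) (minn i.+1 (size p))); last 2 first.
- move=> j; rewrite geq_min => /orP [ij _|pj _].
  + by rewrite coef_low ?mulr0.
  + by rewrite nth_default ?mul0r.
- exact: geq_minr.
rewrite [RHS](@sum_trunc (fun j => p`_j * (h * f ^+ j)`_i) (minn i.+1 (size p))) //.
- move=> j; rewrite geq_min => /orP [ij _|pj _].
  + by rewrite coef_low ?mulr0.
  + by rewrite nth_default ?mul0r.
- exact: geq_minl.
Qed.

Lemma comp_polyXn' (p q : P) k : (p ^+ k) \Po q = (p \Po q) ^+ k.
Proof.
elim: k => [|k IH]; first by rewrite !expr0 comp_polyC.
by rewrite !exprS comp_polyM IH.
Qed.

Definition mx (m : nat) (g f : P) : 'M[F]_(m.+1) := \matrix_(i, k) (g * f ^+ k)`_i.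

Lemma mxM m (g1 f1 g2 f2 : P) : 'X %| f1 ->
  mx m g1 f1 *m mx m g2 f2 = mx m (g1 * (g2 \Po f1)) (f2 \Po f1).
Proof.
move=> Xf; apply/matrixP => i k; rewrite !mxE -mulrA -comp_polyXn' -comp_polyM.
rewrite compC //.
under eq_bigr => j _ do rewrite !mxE mulrC.
rewrite (@sum_trunc (fun j => (g2 * f2 ^+ k)`_j * (g1 * f1 ^+ j)`_i) i.+1) //.
  by move=> j ij _; rewrite (@coef_low g1 f1 j i Xf ij) mulr0.
Qed.

Definition cg (m : nat) (p q : P) := 'X^(m.+1) %| p - q.

Lemma cg_refl m p : cg m p p.
Proof. by rewrite /cg subrr dvdp0. Qed.

Lemma cg_sym m p q : cg m p q -> cg m q p.
Proof. by rewrite /cg -opprB dvdpNr. Qed.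

Lemma cg_trans m p q r : cg m p q -> cg m q r -> cg m p r.
Proof.
move=> h1 h2; rewrite /cg in h1 h2 *; have -> : p - r = (p - q) + (q - r) by ring.
exact: dvdp_add.
Qed.

Lemma cgD m p p' q q' : cg m p p' -> cg m q q' -> cg m (p + q) (p' + q').
Proof.
move=> h1 h2; rewrite /cg in h1 h2 *; have -> : (p + q) - (p' + q') = (p - p') + (q - q') by ring.
exact: dvdp_add.
Qed.

Lemma cgM m p p' q q' : cg m p p' -> cg m q q' -> cg m (p * q) (p' * q').
Proof.
move=> h1 h2; rewrite /cg in h1 h2 *; have -> : (p * q) - (p' * q') = p * (q - q') + (p - p') * q' by ring.
by apply: dvdp_add; [apply: dvdp_mull | apply: dvdp_mulr].
Qed.

Lemma cgX m p p' k : cg m p p' -> cg m (p ^+ k) (p' ^+ k).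
Proof.
move=> h; elim: k => [|k IH]; first by rewrite !expr0 cg_refl.
by rewrite !exprS; apply: cgM.
Qed.

Lemma cg0 m p : 'X^(m.+1) %| p -> cg m p 0.
Proof. by rewrite /cg subr0. Qed.

Lemma mx_eq m g g' f f' : cg m g g' -> cg m f f' -> mx m g f = mx m g' f'.
Proof.
move=> hg hf; apply/matrixP => i k; rewrite !mxE; apply/eqP; rewrite -subr_eq0 -coefB.
have : cg m (g * f ^+ k) (g' * f' ^+ k) by apply: cgM => //; apply: cgX.
by case/dvdpP => q ->; rewrite coefMXn ltn_ord.
Qed.

Lemma mx1 m : mx m 1 'X = 1%:M.
Proof.
apply/matrixP => i k; rewrite !mxE mul1r coefXn.
by case: (i =P k) => [->|/eqP ne]; rewrite ?eqxx //; move: ne; rewrite -val_eqE /= => /negbTE ->.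
Qed.

Lemma mx_of m (M : 'M[F]_(m.+1)) (g f : P) :
  (forall i k : 'I_(m.+1), M i k = (g * f ^+ k)`_i) -> M = mx m g f.
Proof. by move=> h; apply/matrixP => i k; rewrite mxE h. Qed.

Lemma in_TR1 m : in_TR m 1%:M.
Proof.
exists 1, 'X; split; rewrite ?coefC ?coefX //.
by move=> i k; rewrite -mx1 mxE.
Qed.

Lemma in_TRM m M N : in_TR m M -> in_TR m N -> in_TR m (M *m N).
Proof.
move=> [g1 [f1 [g10 f10 f11 hM]]] [g2 [f2 [g20 f20 f21 hN]]].
have Xf := Xdvd f10.
rewrite (mx_of hM) (mx_of hN) mxM //.
exists (g1 * (g2 \Po f1)), (f2 \Po f1); split; last by move=> i k; rewrite mxE.
- by rewrite compC // big_ord1 expr0 mulr1 g10 g20 mulr1.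
- by rewrite -[f2 \Po f1]mul1r compC // big_ord1 f20 mul0r.
- rewrite -[f2 \Po f1]mul1r compC // !big_ord_recr big_ord0 /= f20 f21.
  by rewrite mul0r add0r mul1r mul1r expr1 ?add0r f11.
Qed.

Lemma frob (p : P) e : (p + 1) ^+ (2 ^ e) = p ^+ (2 ^ e) + 1.
Proof.
elim: e => [|e IH]; first by rewrite !expr1.
by rewrite expnSr !exprM IH sqrrD1 mulr2n add_same addr0.
Qed.

Definition u : P := 'X + 1.
Definition fS (N : nat) : P := 'X * u ^+ N.-1.
Definition Rm N j := mx N (u ^+ j) 'X.
Definition Sm N := mx N 1 (fS N).

Lemma comp1 (q : P) : 1 \Po q = 1.
Proof. by rewrite -polyC1 comp_polyC. Qed.

Lemma Xdvd_fS N : 'X %| fS N.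
Proof. exact: dvdp_mulr (dvdpp _). Qed.

Lemma RmD N a b : Rm N a *m Rm N b = Rm N (a + b).
Proof. by rewrite /Rm mxM ?dvdpp // !comp_polyXr exprD. Qed.

Lemma Rm0 N : Rm N 0 = 1%:M.
Proof. by rewrite /Rm expr0 mx1. Qed.

Lemma Rm2N n : Rm (2 ^ n) (2 ^ n.+1) = 1%:M.
Proof.
rewrite -mx1 /Rm; apply: mx_eq; last exact: cg_refl.
rewrite /cg /u frob addrK dvdp_exp2l // expnS.
have := expn_gt0 2 n; lia.
Qed.

Lemma RmN n : Rm (2 ^ n) (2 ^ n) != 1%:M.
Proof.
apply/eqP => /matrixP /(_ ord_max ord0); rewrite !mxE /u frob expr0 mulr1.
rewrite coefD coefXn coefC eqxx /=.
by rewrite -val_eqE /= expn_eq0 /= addr0 => /eqP; rewrite oner_eq0.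
Qed.

Section Fixed.
Variable n : nat.
Hypothesis hn : (1 <= n)%N.
Local Notation N := (2 ^ n)%N.

Lemma N_gt0 : (0 < N)%N. Proof. by rewrite expn_gt0. Qed.

Lemma uN : u ^+ N = 'X ^+ N + 1.
Proof. by rewrite /u frob. Qed.

Lemma uf_eq : u * fS N = 'X + 'X ^+ N.+1.
Proof.
rewrite /fS mulrCA -exprS prednK ?N_gt0 // uN mulrDr mulr1 -exprS; ring.
Qed.

Lemma h1 : cg N (u * fS N) 'X.
Proof. by rewrite /cg uf_eq addrAC subrr add0r dvdpp. Qed.

Lemma h2 : cg N (u * (fS N + 1)) 1.
Proof.
have -> : u * (fS N + 1) = 'X ^+ N.+1 + 1 + ('X + 'X).
  by rewrite mulrDr mulr1 uf_eq /u; ring.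
by rewrite add_same addr0 /cg addrK dvdpp.
Qed.

Lemma eff (q : P) : fS N \Po q = q * (q + 1) ^+ N.-1.
Proof.
by rewrite /fS comp_polyM comp_polyX comp_polyXn' /u comp_polyD comp_polyX comp1.
Qed.

Lemma cg_ff : cg N (fS N \Po fS N) 'X.
Proof.
have h3 : u ^+ N * (fS N \Po fS N) = (u * fS N) * (u * (fS N + 1)) ^+ N.-1.
  rewrite eff -{1}(prednK N_gt0) exprS exprMn; ring.
have h4 : cg N (u ^+ N * (fS N \Po fS N)) 'X.
  by rewrite h3; have := cgM h1 (cgX N.-1 h2); rewrite expr1n mulr1.
have h5 : cg N (u ^+ N * (fS N \Po fS N)) (fS N \Po fS N).
  rewrite /cg uN mulrDl mul1r addrK eff {2}/fS !mulrA -exprSr.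
  by apply: dvdp_mulr; apply: dvdp_mulr; apply: dvdpp.
exact: cg_trans (cg_sym h5) h4.
Qed.

Lemma SS : Sm N *m Sm N = 1%:M.
Proof.
rewrite /Sm mxM ?Xdvd_fS // -mx1; apply: mx_eq; last exact: cg_ff.
by rewrite comp1 mulr1; apply: cg_refl.
Qed.

Lemma SR : Sm N *m Rm N 1 = mx N (fS N + 1) (fS N).
Proof.
by rewrite /Sm /Rm mxM ?Xdvd_fS // expr1 mul1r /u comp_polyD !comp_polyX comp1.
Qed.

Lemma SRSR : (Sm N *m Rm N 1) *m (Sm N *m Rm N 1) = 1%:M.
Proof.
rewrite SR mxM ?Xdvd_fS // -mx1; apply: mx_eq; last exact: cg_ff.
rewrite comp_polyD comp1.
apply: cg_trans (cgM (cg_refl _ (fS N + 1)) (cgD cg_ff (cg_refl _ 1))) _.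
by rewrite mulrC; apply: h2.
Qed.

Lemma coef0u k : (u ^+ k)`_0 = 1.
Proof.
elim: k => [|k IH]; first by rewrite expr0 coefC.
by rewrite exprSr /u mulrDr mulr1 coefD coefMX /= add0r IH.
Qed.

Lemma coef1u k : (u ^+ k)`_1 = k%:R.
Proof.
elim: k => [|k IH]; first by rewrite expr0 coefC.
by rewrite exprSr /u mulrDr mulr1 coefD coefMX /= coef0u IH mulrS.
Qed.

Lemma Nm1 : ((N.-1)%:R : F) = 1.
Proof.
have h : ((N.-1)%:R : F) + 1 = 0.
  rewrite -mulrSr prednK ?N_gt0 // -(subnKC hn) expnS natrM two0 mul0r //.
by move: h => /eqP; rewrite addr_eq0 => /eqP ->; apply: val_inj.
Qed.

Lemma S_notR j : Sm N != Rm N j.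
Proof.
have N2 : (2 < N.+1)%N.
  by have := leq_pexp2l (isT : (0 < 2)%N) hn; rewrite expn1; lia.
apply/eqP => /matrixP E.
have e1 := E (inord 1) (inord 0); have e2 := E (inord 2) (inord 1).
move: e1 e2; rewrite !mxE !inordK //; try lia.
rewrite expr0 !mulr1 expr1 mul1r coefC /= => e1.
rewrite expr1 coefMX /= -e1 /fS coefXM /= coef1u Nm1 => /eqP.
by rewrite oner_eq0.
Qed.

End Fixed.
Lemma in_TR_mx m (g f : P) : g`_0 = 1 -> f`_0 = 0 -> f`_1 = 1 -> in_TR m (mx m g f).
Proof. by move=> a b c; exists g, f; split => // i k; rewrite mxE. Qed.

Lemma fS0 N : (fS N)`_0 = 0. Proof. by rewrite /fS coefXM. Qed.
Lemma fS1 N : (fS N)`_1 = 1. Proof. by rewrite /fS coefXM /= coef0u. Qed.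

Lemma ord2 (gT : finGroupType) (x : gT) : (x * x = 1)%g -> x != 1%g -> #[x]%g = 2%N.
Proof.
move=> xx x1; have d : (#[x]%g %| 2)%N by rewrite order_dvdn expgS expg1 xx.
have := @dvdn_leq _ 2 isT d; have := order_gt0 x; move: x1; rewrite -order_eq1; lia.
Qed.

Theorem theorem12 (n : nat) (hn : (1 <= n)%N) :
  exists phi : gsort 'D_(2 ^ n.+2) -> 'M['F_2]_((2 ^ n).+1),
    [/\ injective phi,
        phi 1%g = (1%:M)%R,
        (forall x y : gsort 'D_(2 ^ n.+2), phi (x * y)%g = (phi x *m phi y)%R) &
        (forall x, in_TR (2 ^ n) (phi x))].
Proof.
have uR : Rm (2 ^ n) 1 \is a GRing.unit.
  have [] // := @mulmx1_unit _ _ (Rm (2 ^ n) 1) (Rm (2 ^ n) (2 ^ n.+1).-1).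
  by rewrite RmD add1n prednK ?expn_gt0 // Rm2N.
have uS : Sm (2 ^ n) \is a GRing.unit.
  by have [] // := @mulmx1_unit _ _ (Sm (2 ^ n)) (Sm (2 ^ n)); rewrite SS.
pose r : {'GL_((2 ^ n).+1)[F]} := FinRing.Unit uR.
pose s : {'GL_((2 ^ n).+1)[F]} := FinRing.Unit uS.
have rX j : GLval (r ^+ j)%g = Rm (2 ^ n) j.
  elim: j => [|j IH]; first by rewrite expg0 Rm0.
  by rewrite expgSr GL_MxE IH RmD addn1.
have ord_r : #[r]%g = (2 ^ n.+1)%N.
  have d1 : (#[r]%g %| 2 ^ n.+1)%N.
    by rewrite order_dvdn; apply/eqP/val_inj; rewrite /= rX Rm2N.
  have d2 : ~~ (#[r]%g %| 2 ^ n)%N.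
    rewrite order_dvdn; apply/negP => /eqP /(congr1 GLval).
    by rewrite rX; apply/eqP; apply: RmN.
  case/dvdn_pfactor: d1 => // k; rewrite leq_eqVlt => /orP [/eqP -> // | kn] ek.
  by case/negP: d2; rewrite ek dvdn_exp2l.
have s2 : (s * s = 1)%g by apply/val_inj; rewrite /= -mulmxE SS.
have sr2 : ((s * r) * (s * r) = 1)%g by apply/val_inj; rewrite /= -!mulmxE SRSR.
have s_notin : s \notin <[r]>%g.
  apply/cycleP => [[j ej]]; apply: (negP (S_notR hn j)).
  by rewrite -rX -ej.
have s1 : s != 1%g by apply: contraNneq s_notin => ->; apply: group1.
have sr1 : (s * r)%g != 1%g.
  apply: contraNneq s_notin => e.
  have -> : s = (r^-1)%g by rewrite -(mulgK r s) e mul1g.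
  by rewrite groupV cycle_id.
have sne : s != (s * r)%g.
  apply/eqP => e; have r1 : r = 1%g by rewrite -(mulKg s r) -e mulVg.
  by move: ord_r; rewrite r1 order1 => /esym/eqP; rewrite -(expn0 2) eqn_exp2l.
have isoG := involutions_gen_dihedral (ord2 s2 s1) (ord2 sr2 sr1) sne.
set G := <<[set s; (s * r)%g]>>%G in isoG.
have sG : s \in G by rewrite mem_gen // set21.
have rG : r \in G.
  have -> : r = (s * (s * r))%g by rewrite mulgA s2 mul1g.
  by rewrite groupM // mem_gen // set22.
have q1 : (1 < 2 ^ n.+1)%N by rewrite -{1}(expn0 2) ltn_exp2l.
have cardG : #|G| = (2 ^ n.+2)%N.
  have homG : (G \homg [set: 'D_((2 ^ n.+1).*2)])%g.
    rewrite (Grp'_dihedral q1); apply/existsP; exists (s, (s * r)%g).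
    rewrite /= !xpair_eqE joing_idl joing_idr eqxx /=.
    have e2 : forall x : {'GL_((2 ^ n).+1)[F]}, (x ^+ 2 = x * x)%g by move=> y; rewrite expgS expg1.
    by rewrite !e2 s2 sr2 mulgA s2 mul1g -ord_r expg_order !eqxx.
  have c1 : (#|G| %| (2 ^ n.+1).*2)%N by rewrite -(card_dihedral q1) card_homg.
  have c2 : (2 ^ n.+1 < #|G|)%N.
    rewrite -ord_r orderE; apply: proper_card; apply/properP; split.
      by rewrite cycle_subG.
    by exists s.
  move: c1 c2; rewrite -muln2 -expnSr => /dvdnP [k hk] c2.
  move: hk q1; rewrite expnS; case: k => [|[|k]] hk q1; nia.
rewrite cardG isog_sym in isoG.
case/isogP: isoG => f injf fD.
exists (fun x => GLval (f x)); split.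
- move=> x y e; apply: (injmP injf); rewrite ?in_setT //; exact: val_inj.
- by rewrite morph1.
- by move=> x y; rewrite morphM ?in_setT // GL_MxE.
move=> x; have : f x \in G by rewrite -fD mem_morphim ?in_setT.
case/gen_prodgP => k [c cA ->].
apply: (big_ind (fun g : {'GL_((2 ^ n).+1)[F]} => in_TR (2 ^ n) (GLval g))).
- exact: in_TR1.
- by move=> a b ha hb; rewrite GL_MxE; apply: in_TRM.
move=> i _; case/set2P: (cA i) => ->.
  by apply: in_TR_mx; rewrite ?coefC ?fS0 ?fS1.
rewrite GL_MxE /= SR; apply: in_TR_mx; rewrite ?coefD ?coefC ?fS0 ?fS1 //=.
by rewrite add0r.
Qed.
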